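(* For each $l\in\{0,\dots,d-1\}$, writing $\varepsilon_{N,l}=q^{-dN-l}$, one has \[\lim_{N\to\infty} f^{-N}\sqrt{D}\,\Lambda_{\varepsilon_{N,l}}(f)=\mathfrak a_{d-1-l},\] where the convergence is in the Hausdorff metric on subsets of $k_\infty$ and $\mathfrak a_{d-1-l}=(f,fT,\dots,fT^{d-1-l})\subset A_{\infty_1}$.
   Context: Let $q$ be a power of a prime, $k=\mathbb F_q(T)$, $A=\mathbb F_q[T]$, $k_\infty=\mathbb F_q((1/T))$ with absolute value $|x|=q^{\deg_T x}$ (i.e. $q^{-v_\infty(x)}$). For $x\in k_\infty$ let $\|x\|$ be the distance from $x$ to the nearest element of $A$. For $f\in k_\infty$ and $\varepsilon>0$ let $\Lambda_\varepsilon(f)=\{\lambda\in A:\|\lambda f\|<\varepsilon\}$ (an $\mathbb F_q$-vector space). Let $f\in k_\infty\setminus k$ be a quadratic unit: $f$ is a root of $X^2-aX-b$ with $a\in A$ monic, $d:=\deg_T a\ge 1$, $b\in\mathbb F_q^*$, and $f$ is the root with $|f|=q^d$ (the conjugate $f^*$ has $|f^*|=q^{-d}$). Let $D=a^2+4b$, with $\sqrt D$ chosen so that $f=(a+\sqrt D)/2$ if the characteristic is odd, and $\sqrt D=a$ in characteristic $2$. Let $K=k(f)\subset k_\infty$, let $\infty_1$ be the place of $K$ induced by the embedding $K\subset k_\infty$ (so $v_{\infty_1}(f)=-d$), and let $A_{\infty_1}$ be the ring of elements of $K$ regular away from $\infty_1$; one has $A_{\infty_1}=\mathbb F_q[f,fT,\dots,fT^{d-1}]$.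 For $0\le i\le d-1$, $\mathfrak a_i$ denotes the ideal $(f,fT,\dots,fT^i)$ of $A_{\infty_1}$. *)

(* Defs.v *)
(* The completion k_oo = F_q((1/T)) is built concretely as
   Laurent series in T with coefficients bounded above. *)
From HB Require Import structures.
From mathcomp Require Import all_boot all_order all_algebra.
From mathcomp Require Import zify.
From Stdlib Require Import ClassicalEpsilon.
Set Implicit Arguments. Unset Strict Implicit. Unset Printing Implicit Defensive.
Import Order.TTheory GRing.Theory Num.Theory.
Local Open Scope ring_scope.

Section Laurent.
Variable F : finFieldType.

Definition qF : nat := #|F|.

Definition bounded_above (c : int -> F) :=
  exists n : int, forall i : int, n < i -> c i = 0.

(* k_oo : elements sum_{i <= n} c_i T^i, c_i = coefficient of T^i *)
Definition laurent := {c : int -> F | bounded_above c}.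
Definition lc (x : laurent) : int -> F := proj1_sig x.

Definition lub (x : laurent) : int :=
  proj1_sig (constructive_indefinite_description _ (proj2_sig x)).
Lemma lubP (x : laurent) i : lub x < i -> lc x i = 0.
Proof. exact: (proj2_sig (constructive_indefinite_description _ (proj2_sig x))). Qed.

Definition lconst_c (c : F) : int -> F := fun i => if i == 0 then c else 0.
Lemma lconst_b c : bounded_above (lconst_c c).
Proof. exists 0 => i hi; rewrite /lconst_c gt_eqF //. Qed.
Definition lconst c : laurent := exist _ _ (lconst_b c).
Definition lzero := lconst 0.
Definition lone := lconst 1.

Definition lpoly_c (p : {poly F}) : int -> F :=
  fun i => match i with Posz n => p`_n | Negz _ => 0 end.
Lemma lpoly_b p : bounded_above (lpoly_c p).
Proof.
exists (size p)%:Z => -[n|n] hi //=; apply: nth_default.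
by move: hi; rewrite ltz_nat => /ltnW.
Qed.
Definition lpoly p : laurent := exist _ _ (lpoly_b p).

Definition ladd_c (x y : laurent) : int -> F := fun i => lc x i + lc y i.
Lemma ladd_b x y : bounded_above (ladd_c x y).
Proof.
exists (Num.max (lub x) (lub y)) => i hi; rewrite /ladd_c !lubP ?addr0 //.
  by apply: le_lt_trans hi; rewrite le_max lexx orbT.
by apply: le_lt_trans hi; rewrite le_max lexx.
Qed.
Definition ladd x y : laurent := exist _ _ (ladd_b x y).

Definition lopp_c (x : laurent) : int -> F := fun i => - lc x i.
Lemma lopp_b x : bounded_above (lopp_c x).
Proof. by exists (lub x) => i hi; rewrite /lopp_c lubP ?oppr0. Qed.
Definition lopp x : laurent := exist _ _ (lopp_b x).
Definition lsub x y := ladd x (lopp y).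

(* Cauchy product: (xy)_k = sum_{i} x_i y_{k-i}, the (finitely many)
   possibly nonzero terms having lub y - k <= ... i.e. k - lub y <= i <= lub x *)
Definition lmul_c (x y : laurent) : int -> F := fun k =>
  \sum_(j < (absz (lub x + lub y - k)%R).+1)
     lc x (lub x - (j : nat)%:Z) * lc y (k - lub x + (j : nat)%:Z).
Lemma lmul_b x y : bounded_above (lmul_c x y).
Proof.
exists (lub x + lub y) => k hk; rewrite /lmul_c big1 // => j _.
rewrite [lc y _]lubP ?mulr0 //; lia.
Qed.
Definition lmul x y : laurent := exist _ _ (lmul_b x y).

Definition lexp (x : laurent) (n : nat) : laurent := iter n (lmul x) lone.

(* the multiplicative inverse (0 if none exists) *)
Definition linv (x : laurent) : laurent :=
  match excluded_middle_informative (exists y, lmul x y = lone) with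
  | left H => proj1_sig (constructive_indefinite_description _ H)
  | right _ => lzero
  end.

(* degree in T (i.e. -v_oo) of a nonzero element *)
Definition ldeg (x : laurent) : int :=
  epsilon (inhabits 0) (fun n => lc x n != 0 /\ forall i, n < i -> lc x i = 0).

Definition labs (x : laurent) : rat :=
  match excluded_middle_informative (exists i, lc x i != 0) with
  | left _ => (qF%:R : rat) ^ ldeg x
  | right _ => 0
  end.

(* Lambda_eps(f) = {lam in A : ||lam f|| < eps}, where ||x|| < eps means
   that the distance from x to A is < eps, i.e. |x - p| < eps for some p in A *)
Definition Lambda (f : laurent) (eps : rat) (lam : {poly F}) : Prop :=
  exists p : {poly F}, labs (lsub (lmul (lpoly lam) f) (lpoly p)) < eps.

Definition lT : laurent := lpoly 'X.

Inductive in_Ainf1 (d : nat) (f : laurent) : laurent -> Prop :=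
| Ainf1_const c : in_Ainf1 d f (lconst c)
| Ainf1_gen j : (j < d)%N -> in_Ainf1 d f (lmul f (lexp lT j))
| Ainf1_add x y : in_Ainf1 d f x -> in_Ainf1 d f y -> in_Ainf1 d f (ladd x y)
| Ainf1_mul x y : in_Ainf1 d f x -> in_Ainf1 d f y -> in_Ainf1 d f (lmul x y).

Inductive in_ideal (d : nat) (f : laurent) (i : nat) : laurent -> Prop :=
| ideal0 : in_ideal d f i lzero
| ideal_gen g j : in_Ainf1 d f g -> (j <= i)%N ->
    in_ideal d f i (lmul g (lmul f (lexp lT j)))
| ideal_add x y : in_ideal d f i x -> in_ideal d f i y -> in_ideal d f i (ladd x y).

(* sqrt D: f = (a + sqrt D)/2 in odd characteristic, sqrt D = a in char 2 *)
Definition sqrtD (a : {poly F}) (f : laurent) : laurent :=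
  if (2%N \in [pchar F]) then lpoly a else lsub (ladd f f) (lpoly a).

Definition hausdorff_lt (S T : laurent -> Prop) (e : rat) : Prop :=
  (forall x, S x -> exists y, T y /\ labs (lsub x y) < e) /\
  (forall y, T y -> exists x, S x /\ labs (lsub x y) < e).

Definition hausdorff_cvg (S : nat -> laurent -> Prop) (T : laurent -> Prop) :=
  forall e : rat, 0 < e -> exists N0 : nat, forall N : nat, (N0 <= N)%N ->
    hausdorff_lt (S N) T e.

End Laurent.

(* Main.v *)
From HB Require Import structures.
Require Import Defs.
From mathcomp Require Import all_boot all_order all_algebra.
From mathcomp Require Import zify ring.
From mathcomp Require Import boolp.
From Stdlib Require Import Classical ClassicalEpsilon FunctionalExtensionality ProofIrrelevance.
Set Implicit Arguments. Unset Strict Implicit. Unset Printing Implicit Defensive.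
Import Order.TTheory GRing.Theory Num.Theory.
Local Open Scope ring_scope.

Section L.
Variable F : finFieldType.
Local Notation R := (laurent F).

Lemma lext (x y : R) : (forall i, lc x i = lc y i) -> x = y.
Proof.
case: x => cx hx; case: y => cy hy /= H.
have E : cx = cy by apply: functional_extensionality.
subst cy; congr exist; apply: proof_irrelevance.
Qed.

Definition bnd (x : R) (n : int) := forall i, n < i -> lc x i = 0.

Definition WS (g : int -> F) (H : int) (K : nat) := \sum_(j < K) g (H - (j:nat)%:Z).

Lemma WS_shift g H K (s : nat) : (forall i, H < i -> i <= H + s%:Z -> g i = 0) ->
  WS g (H + s%:Z) (K + s) = WS g H K.
Proof.
move=> Hz; rewrite /WS addnC big_split_ord /= big1 ?add0r.
  by apply: eq_bigr => j _; congr g; rewrite /=; lia.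
by move=> j _; apply: Hz => /=; have := ltn_ord j; lia.
Qed.

Lemma WS_ext g H K (t : nat) : (forall i, H - (K + t)%:Z < i -> i <= H - K%:Z -> g i = 0) ->
  WS g H (K + t) = WS g H K.
Proof.
move=> Hz; rewrite /WS big_split_ord /= [X in _ + X]big1 ?addr0 //.
by move=> j _; apply: Hz => /=; have := ltn_ord j; lia.
Qed.

Lemma WS_eq g lo hi H1 K1 H2 K2 :
  (forall i, hi < i -> g i = 0) -> (forall i, i < lo -> g i = 0) ->
  hi <= H1 -> H1 - K1%:Z < lo -> hi <= H2 -> H2 - K2%:Z < lo ->
  WS g H1 K1 = WS g H2 K2.
Proof.
move=> Zh Zl h1 k1 h2 k2.
have step : forall H K s, hi <= H -> WS g (H + s%:Z) (K + s) = WS g H K.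
  move=> H K s hH; apply: WS_shift => i hi1 _; apply: Zh; lia.
have stepK : forall H K t, H - K%:Z < lo -> WS g H (K + t) = WS g H K.
  move=> H K t hK; apply: WS_ext => i _ hi1; apply: Zl; lia.
have gen : forall Hm, H1 <= Hm -> H2 <= Hm -> WS g H1 K1 = WS g H2 K2.
  move=> Hm m1 m2.
  pose s1 := absz (Hm - H1); pose s2 := absz (Hm - H2).
  have E1 : H1 + s1%:Z = Hm by rewrite /s1; lia.
  have E2 : H2 + s2%:Z = Hm by rewrite /s2; lia.
  rewrite -(step H1 K1 s1 h1) -(step H2 K2 s2 h2) E1 E2.
  have e1 : WS g Hm (K1 + s1) = WS g Hm (K1 + s1 + (K2 + s2)) by rewrite (stepK Hm (K1 + s1)) //; lia.
  have e2 : WS g Hm (K2 + s2) = WS g Hm (K2 + s2 + (K1 + s1)) by rewrite (stepK Hm (K2 + s2)) //; lia.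
  rewrite e1 e2; congr WS; lia.
by case: (lerP H1 H2) => h; [apply: (gen H2) | apply: (gen H1)]; lia.
Qed.

Lemma lubB (x : R) : bnd x (lub x).
Proof. by move=> i; apply: lubP. Qed.

Lemma bnd_le x m n : m <= n -> bnd x m -> bnd x n.
Proof. by move=> mn H i ni; apply: H; lia. Qed.

Lemma lmulE (x y : R) Hx Hy H (K : nat) k : bnd x Hx -> bnd y Hy -> Hx <= H ->
  H - K%:Z < k - Hy ->
  lc (lmul x y) k = \sum_(j < K) lc x (H - (j:nat)%:Z) * lc y (k - H + (j:nat)%:Z).
Proof.
move=> bx hy hH hK.
pose g := fun i => lc x i * lc y (k - i).
have -> : lc (lmul x y) k = WS g (lub x) (absz (lub x + lub y - k)%R).+1.
  by apply: eq_bigr => j _; rewrite /g; congr (_ * lc y _); lia.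
have -> : \sum_(j < K) lc x (H - (j:nat)%:Z) * lc y (k - H + (j:nat)%:Z) = WS g H K.
  by apply: eq_bigr => j _; rewrite /g; congr (_ * lc y _); lia.
apply: (@WS_eq g (Num.max (k - Hy) (k - lub y)) (Num.min Hx (lub x))).
- move=> i; rewrite gt_min => /orP[h|h]; rewrite /g.
    by rewrite bx ?mul0r.
  by rewrite lubP ?mul0r.
- move=> i; rewrite lt_max => /orP[h|h]; rewrite /g.
    by rewrite hy ?mulr0 //; lia.
  by rewrite [lc y _]lubP ?mulr0 //; lia.
- by rewrite ge_min lexx orbT.
- case: (lerP (lub x + lub y) k) => h; rewrite lt_max; apply/orP; right; lia.
- by rewrite ge_min hH.
- by rewrite lt_max hK.
Qed.

Lemma bndM (x y : R) m n : bnd x m -> bnd y n -> bnd (lmul x y) (m + n).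
Proof.
move=> bx hy i hi; rewrite (@lmulE x y m n m 0) ?big_ord0 //; lia.
Qed.

Lemma lcM_top (x y : R) m n : bnd x m -> bnd y n ->
  lc (lmul x y) (m + n) = lc x m * lc y n.
Proof.
move=> bx hy; rewrite (@lmulE x y m n m 1) ?big_ord1 //=; last by lia.
by congr (lc x _ * lc y _); lia.
Qed.

Lemma lcD (x y : R) i : lc (ladd x y) i = lc x i + lc y i.
Proof. by []. Qed.
Lemma lcN (x : R) i : lc (lopp x) i = - lc x i.
Proof. by []. Qed.

Lemma bndD (x y : R) m : bnd x m -> bnd y m -> bnd (ladd x y) m.
Proof. by move=> bx hy i hi; rewrite /= /ladd_c bx ?hy ?addr0. Qed.

Lemma lmulE' (x y : R) Hx Hy k : bnd x Hx -> bnd y Hy ->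
  lc (lmul x y) k = \sum_(j < (absz (Hx + Hy - k)%R).+1)
     lc x (Hx - (j:nat)%:Z) * lc y (k - Hx + (j:nat)%:Z).
Proof. by move=> bx hy; apply: (lmulE bx hy) => //; lia. Qed.

Lemma lmulC (x y : R) : lmul x y = lmul y x.
Proof.
apply: lext => k.
pose K := (absz (lub x + lub y - k)%R).+1.
rewrite (@lmulE x y (lub x) (lub y) (lub x) K _ (@lubB x) (@lubB y)) //; last by rewrite /K; lia.
rewrite (@lmulE y x (lub y) (lub x) (k - lub x + K%:Z - 1) K _ (@lubB y) (@lubB x)); last 2 first.
  rewrite /K; lia.
  rewrite /K; lia.
rewrite (reindex_inj (@rev_ord_inj K)); apply: eq_bigr => j _; rewrite mulrC /=.
have := ltn_ord j; move=> hj.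
by congr (lc y _ * lc x _); rewrite /=; lia.
Qed.

Definition tr (x : R) (M : int) (P : nat) : {poly F} := \poly_(n < P) lc x (M - n%:Z).

Lemma trM (x y : R) M1 M2 P n : bnd x M1 -> bnd y M2 -> (n < P)%N ->
  lc (lmul x y) (M1 + M2 - n%:Z) = (tr x M1 P * tr y M2 P)`_n.
Proof.
move=> bx hy nP; rewrite (@lmulE x y M1 M2 M1 n.+1) //; last by lia.
rewrite coefM; apply: eq_bigr => j _; rewrite !coef_poly.
have := ltn_ord j => hj.
rewrite ifT; last by apply: leq_ltn_trans nP; rewrite -ltnS.
rewrite ifT; last by apply: leq_ltn_trans nP; apply: leq_subr.
by congr (_ * lc y _); rewrite /=; lia.
Qed.

Lemma coefM_eql (p p' q : {poly F}) n : (forall i, (i <= n)%N -> p`_i = p'`_i) ->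
  (p * q)`_n = (p' * q)`_n.
Proof. by move=> H; rewrite !coefM; apply: eq_bigr => j _; rewrite H // -ltnS. Qed.

Lemma lmulA (x y z : R) : lmul x (lmul y z) = lmul (lmul x y) z.
Proof.
apply: lext => k.
set M1 := lub x; set M2 := lub y; set M3 := lub z.
have bx : bnd x M1 by apply: lubB.
have hy : bnd y M2 by apply: lubB.
have bz : bnd z M3 by apply: lubB.
case: (ltrP (M1 + M2 + M3) k) => hk.
  rewrite (bndM bx (bndM hy bz)) ?(bndM (bndM bx hy) bz) //; lia.
pose n := absz (M1 + M2 + M3 - k)%R.
have -> : k = M1 + (M2 + M3) - n%:Z by rewrite /n; lia.
rewrite (trM (P:=n.+1) bx (bndM hy bz)) //.
have -> : M1 + (M2 + M3) - n%:Z = M1 + M2 + M3 - n%:Z by lia.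
rewrite (trM (P:=n.+1) (bndM bx hy) bz) //.
rewrite [tr x M1 _ * _]mulrC (@coefM_eql (tr (lmul y z) (M2 + M3) n.+1) (tr y M2 n.+1 * tr z M3 n.+1)); last first.
  move=> i hi; rewrite coef_poly ifT; last by rewrite ltnS.
  by rewrite -(trM hy bz) ?ltnS.
rewrite (@coefM_eql (tr (lmul x y) (M1 + M2) n.+1) (tr x M1 n.+1 * tr y M2 n.+1)); last first.
  move=> i hi; rewrite coef_poly ifT; last by rewrite ltnS.
  by rewrite -(trM bx hy) ?ltnS.
by rewrite mulrC mulrA.
Qed.

Lemma lcone i : lc (lone F) i = if i == 0 then 1 else 0.
Proof. by []. Qed.

Lemma lmul1 (x : R) : lmul (lone F) x = x.
Proof.
apply: lext => k.
have b1 : bnd (lone F) 0 by move=> i hi; rewrite lcone gt_eqF.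
rewrite (@lmulE (lone F) x 0 (lub x) 0 (absz (lub x - k)%R).+1 _ b1 (@lubB x)) //; last by lia.
rewrite big_ord_recl /= big1 ?addr0.
  by rewrite /lconst_c /= mul1r.
move=> j _; by rewrite /lconst_c /bump /= mul0r.
Qed.

Lemma lmulDl (x y z : R) : lmul (ladd x y) z = ladd (lmul x z) (lmul y z).
Proof.
apply: lext => k.
pose B := Num.max (lub x) (lub y).
have bx : bnd x B by apply: (bnd_le _ (@lubB x)); rewrite le_max lexx.
have hy : bnd y B by apply: (bnd_le _ (@lubB y)); rewrite le_max lexx orbT.
rewrite lcD (lmulE' _ (bndD bx hy) (@lubB z)) (lmulE' _ bx (@lubB z)) (lmulE' _ hy (@lubB z)).
by rewrite -big_split; apply: eq_bigr => j _; rewrite lcD mulrDl.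
Qed.

Lemma laddA : associative (@ladd F).
Proof. by move=> x y z; apply: lext => i; rewrite !lcD addrA. Qed.
Lemma laddC : commutative (@ladd F).
Proof. by move=> x y; apply: lext => i; rewrite !lcD addrC. Qed.
Lemma ladd0 : left_id (lzero F) (@ladd F).
Proof. by move=> x; apply: lext => i; rewrite !lcD /= /lconst_c; case: ifP; rewrite add0r. Qed.
Lemma laddN : left_inverse (lzero F) (@lopp F) (@ladd F).
Proof. by move=> x; apply: lext => i; rewrite !lcD lcN addNr /= /lconst_c; case: ifP. Qed.
Lemma lone_neq0 : lone F <> lzero F.
Proof. by move=> /(congr1 (fun x => lc x 0)) /= /eqP; rewrite /lconst_c /= oner_eq0. Qed.
End L.

HB.instance Definition _ (F : finFieldType) := gen_eqMixin (laurent F).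
HB.instance Definition _ (F : finFieldType) := gen_choiceMixin (laurent F).
HB.instance Definition _ (F : finFieldType) :=
  GRing.isZmodule.Build (laurent F) (@laddA F) (@laddC F) (@ladd0 F) (@laddN F).
HB.instance Definition _ (F : finFieldType) :=
  GRing.Zmodule_isComNzRing.Build (laurent F) (@lmulA F) (@lmulC F) (@lmul1 F) (@lmulDl F)
   (introN eqP (@lone_neq0 F)).

Section M.
Variable F : finFieldType.
Local Notation R := (laurent F).
Local Notation P := (@lpoly F).

Lemma lcPz (p : {poly F}) (z : int) : lc (P p) z = if 0 <= z then p`_(absz z) else 0.
Proof. by case: z. Qed.

Lemma lcC (c : F) (z : int) : lc (lconst c) z = if z == 0 then c else 0.
Proof. by []. Qed.

Lemma mono_mul (x y : R) (m : int) (c : F) : (forall i, i != m -> lc x i = 0) ->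
  lc x m = c -> forall k, lc (x * y) k = c * lc y (k - m).
Proof.
move=> Hx Hm k.
have bx : bnd x m by move=> i hi; apply: Hx; rewrite gt_eqF.
rewrite (@lmulE F x y m (lub y) m (absz (m + lub y - k)%R).+1 _ bx (@lubB _ y)) //; last by lia.
rewrite big_ord_recl big1 ?addr0.
  rewrite /= Hm; congr (_ * lc y _); lia.
move=> j _; rewrite Hx ?mul0r // lift0; apply/eqP; lia.
Qed.

Lemma P_add p q : P (p + q) = P p + P q.
Proof. by apply: lext => z; rewrite lcD !lcPz coefD; case: ifP; rewrite ?addr0. Qed.
Lemma P_opp p : P (- p) = - P p.
Proof. by apply: lext => z; rewrite lcN !lcPz coefN; case: ifP; rewrite ?oppr0. Qed.
Lemma P_sub p q : P (p - q) = P p - P q.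
Proof. by rewrite P_add P_opp. Qed.
Lemma P_C c : P c%:P = lconst c.
Proof.
apply: lext => z; rewrite lcPz lcC coefC.
case: z => n //=.
Qed.
Lemma P_1 : P 1 = 1.
Proof. by rewrite P_C. Qed.
Lemma P_0 : P 0 = 0.
Proof. by rewrite P_C. Qed.

Lemma lcT (z : int) : lc (lT F) z = if z == 1 then 1 else 0.
Proof.
rewrite /lT lcPz coefX; case: z => [n|n] //=; by case: n => [|[|n]].
Qed.

Lemma P_mulX p : P ('X * p) = lT F * P p.
Proof.
apply: lext => k; rewrite (@mono_mul _ _ 1 1); first last.
- by rewrite lcT.
- by move=> i /negPf hi; rewrite lcT hi.
rewrite mul1r !lcPz coefXM; case: k => [n|n] /=.
  case: n => [|n] //=.
  by rewrite subSS subn0.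
by [].
Qed.

Lemma P_mulC c p : P (c%:P * p) = lconst c * P p.
Proof.
apply: lext => k; rewrite (@mono_mul _ _ 0 c); first last.
- by rewrite lcC.
- by move=> i /negPf hi; rewrite lcC hi.
by rewrite subr0 !lcPz coefCM; case: ifP; rewrite ?mulr0.
Qed.

Lemma P_mul p q : P (p * q) = P p * P q.
Proof.
elim/poly_ind: p => [|p c IH]; first by rewrite mul0r P_0 mul0r.
have -> : (p * 'X + c%:P) * q = 'X * (p * q) + c%:P * q by ring.
have -> : p * 'X + c%:P = 'X * p + c%:P by ring.
rewrite !P_add P_mulX IH P_mulC P_mulX P_C; ring.
Qed.

Lemma P_exp p n : P (p ^+ n) = P p ^+ n.
Proof. by elim: n => [|n IH]; rewrite ?P_1 // !exprS P_mul IH. Qed.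

Lemma lexpE (x : R) n : lexp x n = x ^+ n.
Proof. by elim: n => [|n IH] //; rewrite exprS -IH. Qed.

Lemma linvE (x y : R) : x * y = 1 -> linv x = y.
Proof.
move=> H; rewrite /linv; case: excluded_middle_informative => [h|[]]; last by exists y.
case: constructive_indefinite_description => z /= hz.
have hz' : x * z = 1 by [].
by rewrite -[z]mul1r -H mulrC mulrA [z * x]mulrC hz' mul1r.
Qed.

Lemma bnd0 m : @bnd F 0 m.
Proof. by move=> i hi; rewrite /= /lconst_c; case: ifP. Qed.
Lemma bndN (x : R) m : bnd x m -> bnd (- x) m.
Proof. by move=> h i hi; rewrite lcN h ?oppr0. Qed.
Lemma bndB (x y : R) m : bnd x m -> bnd y m -> bnd (x - y) m.
Proof. by move=> hx hy; apply: bndD => //; apply: bndN. Qed.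
Lemma bndC (c : F) : bnd (lconst c) 0.
Proof. by move=> i hi; rewrite lcC gt_eqF. Qed.
Lemma bndT : bnd (lT F) 1.
Proof. by move=> i hi; rewrite lcT gt_eqF. Qed.
Lemma bndX (x : R) m n : bnd x m -> bnd (x ^+ n) (m * n%:Z).
Proof.
move=> h; elim: n => [|n IH].
  by rewrite mulr0; apply: bndC.
rewrite exprS; apply: (bnd_le _ (bndM h IH)); lia.
Qed.

Lemma top (x : R) n : ~ bnd x n -> exists t, n < t /\ lc x t != 0 /\ bnd x t.
Proof.
move=> nb.
suff : forall k : nat, forall t, n < t -> lc x t != 0 -> absz (lub x - t)%R = k ->
  exists t, n < t /\ lc x t != 0 /\ bnd x t.
  move=> H; apply: NNPP => hn; apply: nb => i ni; apply: NNPP => /eqP ne.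
  by apply: hn; apply: (H _ i ni ne erefl).
move=> k; elim/ltn_ind: k => k IH t nt xt ek.
case: (classic (bnd x t)) => bt; first by exists t.
have [t' [tt' xt']] : exists t', t < t' /\ lc x t' != 0.
  apply: NNPP => hn; apply: bt => i ti; apply: NNPP => /eqP ne; apply: hn; by exists i.
have t'l : t' <= lub x by rewrite leNgt; apply/negP => /lubP; apply/eqP.
have tl : t <= lub x by lia.
apply: (IH (absz (lub x - t')%R) _ t' _ xt' erefl); lia.
Qed.

Lemma q_gt1 : 1 < ((qF F)%:R : rat).
Proof. by rewrite ltr1n; apply: card_finNzRing_gt1. Qed.
Local Notation q := ((qF F)%:R : rat).
Lemma q_gt0 : 0 < q.
Proof. exact: lt_trans ltr01 q_gt1. Qed.

Lemma expz_lt1 (z : int) : (q ^ z < 1) = (z < 0).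
Proof.
case: z => n.
  rewrite -exprnP -[(n%:Z < 0)]/false; apply/negbTE; rewrite -leNgt.
  by apply: exprn_ege1; apply: ltW; apply: q_gt1.
rewrite NegzE -invr_expz -exprnP -[(_ < 0)]/true invf_lt1; last by apply: exprn_gt0; apply: q_gt0.
by apply: exprn_egt1 => //; apply: q_gt1.
Qed.

Lemma expz_lt (t m : int) : (q ^ t < q ^ m) = (t < m).
Proof.
have qm : 0 < q ^ m by apply: exprz_gt0; apply: q_gt0.
rewrite -[q ^ m]mul1r -ltr_pdivrMr // invr_expz -expfzDr ?expz_lt1; last by rewrite gt_eqF // q_gt0.
by rewrite subr_lt0.
Qed.

Lemma ldegE (x : R) t : lc x t != 0 -> bnd x t -> ldeg x = t.
Proof.
move=> h1 h2; rewrite /ldeg.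
have ex : exists n, lc x n != 0 /\ forall i, n < i -> lc x i = 0 by exists t.
case: (epsilon_spec (inhabits 0) _ ex) => e1 e2.
set e := epsilon _ _ in e1 e2 *.
case: (ltgtP e t) => // h.
  by move: h1; rewrite e2 ?eqxx.
by move: e1; rewrite h2 ?eqxx.
Qed.

Lemma labs_lt (x : R) m : (labs x < q ^ m) <-> bnd x (m - 1).
Proof.
rewrite /labs; case: excluded_middle_informative => [[i hi]|hn].
  have [t [_ [t1 t2]]] : exists t, i - 1 < t /\ lc x t != 0 /\ bnd x t.
    apply: top => hb; move: hi; rewrite hb ?eqxx //; lia.
  rewrite (ldegE t1 t2) expz_lt; split => h.
    by apply: (bnd_le _ t2); lia.
  rewrite ltNge; apply/negP => hm; move: t1; rewrite h ?eqxx //; lia.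
split => _; last by apply: exprz_gt0; apply: q_gt0.
by move=> j _; apply: NNPP => /eqP hj; apply: hn; exists j.
Qed.

Lemma labs_eq (x : R) m : labs x = q ^ m -> lc x m != 0 /\ bnd x m.
Proof.
rewrite /labs; case: excluded_middle_informative => [[i hi]|hn]; last first.
  by move=> /esym /eqP; rewrite gt_eqF //; apply: exprz_gt0; apply: q_gt0.
have [t [_ [t1 t2]]] : exists t, i - 1 < t /\ lc x t != 0 /\ bnd x t.
  apply: top => hb; move: hi; rewrite hb ?eqxx //; lia.
rewrite (ldegE t1 t2) => /eqP; rewrite eq_le !leNgt !expz_lt => /andP[/negP h3 /negP h4].
by have -> : m = t by case: (ltgtP m t).
Qed.

End M.

Section Main.
Variable F : finFieldType.
Local Notation R := (laurent F).
Local Notation P := (@lpoly F).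
Local Notation q := ((qF F)%:R : rat).
Variables (a : {poly F}) (b : F) (f : R).
Hypothesis Hmon : a \is monic.
Hypothesis Hd : (1 <= (size a).-1)%N.
Hypothesis Hb : b != 0.
Hypothesis Hroot : lmul f f = ladd (lmul (lpoly a) f) (lconst b).
Hypothesis Habs : labs f = q ^ ((size a).-1)%:Z.

Local Notation d := (size a).-1.
Local Notation A := (P a).
Local Notation B := (lconst b).
Definition fs := A - f.
Local Notation T := (lT F).

Lemma root_f : f * f = A * f + B.
Proof. exact: Hroot. Qed.

Lemma rel0 (x y : R) (z : R) : x - y = z -> z = 0 -> x = y.
Proof. by move=> <- /eqP; rewrite subr_eq0 => /eqP. Qed.

Lemma root_fs : fs * fs = A * fs + B.
Proof.
apply: (rel0 (z := f * f - (A * f + B))); first by rewrite /fs; ring.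
by rewrite root_f subrr.
Qed.

Lemma f_fs : f * fs = - B.
Proof.
apply: (rel0 (z := - (f * f - (A * f + B)))); first by rewrite /fs; ring.
by rewrite root_f subrr oppr0.
Qed.

Lemma lcM_C (c c' : F) : lconst c * lconst c' = lconst (c * c').
Proof. by rewrite -!P_C -P_mul polyCM. Qed.

Lemma Binv : lconst b^-1 * B = 1.
Proof. by rewrite lcM_C mulVf. Qed.

Lemma size_a : size a = d.+1.
Proof. by move: Hd; case: (size a). Qed.

Lemma f_top : lc f d != 0 /\ bnd f d.
Proof. exact: labs_eq Habs. Qed.

Lemma exact_deg (x y : R) m t : lc x m != 0 -> bnd x m -> bnd (x * y) t -> bnd y (t - m).
Proof.
move=> x1 x2 hxy; apply: NNPP => hn.
have [s [s1 [s2 s3]]] := top hn.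
have := lcM_top x2 s3; rewrite hxy; last by lia.
by move/esym/eqP; rewrite mulf_eq0 (negPf x1) (negPf s2).
Qed.

Lemma bnd_fs : bnd fs (- d%:Z).
Proof.
have [t1 t2] := f_top.
have := exact_deg t1 t2 (_ : bnd (f * fs) 0); rewrite sub0r; apply.
by rewrite f_fs; apply: bndN; apply: bndC.
Qed.

Definition g := lconst b^-1 * (f - A).

Lemma f_g : f * g = 1.
Proof.
apply: (rel0 (z := lconst b^-1 * (f * f - (A * f + B)) + (lconst b^-1 * B - 1))).
  by rewrite /g; ring.
by rewrite root_f subrr mulr0 add0r Binv subrr.
Qed.

Lemma bnd_g : bnd g (- d%:Z).
Proof.
have -> : g = - lconst b^-1 * fs by rewrite /g /fs; ring.
by rewrite -[X in bnd _ X]add0r; apply: bndM; [apply: bndN; apply: bndC | apply: bnd_fs].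
Qed.

Lemma linv_fN N : linv (lexp f N) = g ^+ N.
Proof. by rewrite lexpE; apply: linvE; rewrite -exprMn f_g expr1n. Qed.

Lemma sqrtDE : sqrtD a f = f - fs.
Proof.
rewrite /sqrtD; case: ifP => h2; last by rewrite /fs; change (f + f - A = f - (A - f)); ring.
have two : forall x : R, x + x = 0.
  move=> x; apply: lext => i; rewrite lcD /= /lconst_c -mulr2n -mulr_natr (pcharf0 h2) mulr0.
  by case: ifP.
change (A = f - (A - f)).
apply: (rel0 (z := (A + A) - (f + f))); first by rewrite /fs; ring.
by rewrite !two subrr.
Qed.

Definition AF (y s : R) := exists u v : {poly F}, y = P u + P v * f /\ s = P u + P v * fs.

Lemma mulr_gen (r : R) (hr : r * r = A * r + B) u v u' v' :
  (P u + P v * r) * (P u' + P v' * r) =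
  P (u * u' + b%:P * (v * v')) + P (u * v' + u' * v + a * (v * v')) * r.
Proof.
apply: (rel0 (z := P v * P v' * (r * r - (A * r + B)))).
  rewrite !P_add !P_mul P_C; ring.
by rewrite hr subrr mulr0.
Qed.

Lemma AF_P u : AF (P u) (P u).
Proof. by exists u, 0; rewrite P_0 !mul0r !addr0. Qed.

Lemma AF_f : AF f fs.
Proof. by exists 0, 1; rewrite P_0 P_1 !mul1r !add0r. Qed.

Lemma AF_add y s y' s' : AF y s -> AF y' s' -> AF (y + y') (s + s').
Proof.
move=> [u [v [-> ->]]] [u' [v' [-> ->]]]; exists (u + u'), (v + v').
by rewrite !P_add; split; ring.
Qed.

Lemma AF_opp y s : AF y s -> AF (- y) (- s).
Proof.
move=> [u [v [-> ->]]]; exists (- u), (- v).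
by rewrite !P_opp; split; ring.
Qed.

Lemma AF_sub y s y' s' : AF y s -> AF y' s' -> AF (y - y') (s - s').
Proof. by move=> h h'; apply: AF_add => //; apply: AF_opp. Qed.

Lemma AF_mul y s y' s' : AF y s -> AF y' s' -> AF (y * y') (s * s').
Proof.
move=> [u [v [-> ->]]] [u' [v' [-> ->]]].
exists (u * u' + b%:P * (v * v')), (u * v' + u' * v + a * (v * v')).
by split; apply: mulr_gen; [apply: root_f | apply: root_fs].
Qed.

Lemma AF_exp y s n : AF y s -> AF (y ^+ n) (s ^+ n).
Proof.
move=> h; elim: n => [|n IH]; first by rewrite !expr0 -P_1; apply: AF_P.
by rewrite !exprS; apply: AF_mul.
Qed.

Lemma AF_fs : AF fs f.
Proof.
have -> : f = A - fs by rewrite /fs; ring.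
by rewrite {1}/fs; apply: AF_sub; [apply: AF_P | apply: AF_f].
Qed.

Lemma AF_C c : AF (lconst c) (lconst c).
Proof. by rewrite -P_C; apply: AF_P. Qed.

Lemma AF_gen j : AF (f * T ^+ j) (fs * T ^+ j).
Proof. by apply: AF_mul; [apply: AF_f | apply: AF_exp; apply: (AF_P 'X)]. Qed.

Lemma bnd_gen j : bnd (fs * T ^+ j) (j%:Z - d%:Z).
Proof.
apply: (bnd_le _ (bndM bnd_fs (bndX (n:=j) (bndT F)))); lia.
Qed.

Lemma Ainf_AF h : in_Ainf1 d f h -> exists s, AF h s /\ bnd s 0.
Proof.
elim => [c | j hj | x y _ [sx [hx bx]] _ [sy [hy hby]] | x y _ [sx [hx bx]] _ [sy [hy hby]]].
- by exists (lconst c); split; [apply: AF_C | apply: bndC].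
- exists (fs * T ^+ j); rewrite lexpE; split; first by apply: AF_gen.
  by apply: (bnd_le _ (bnd_gen (j:=j))); lia.
- by exists (sx + sy); split; [apply: AF_add | apply: bndD].
- by exists (sx * sy); split; [apply: AF_mul | rewrite -(addr0 0); apply: bndM].
Qed.

Lemma ideal_AF i y : (i < d)%N -> in_ideal d f i y -> exists s, AF y s /\ bnd s (i%:Z - d%:Z).
Proof.
move=> hi; elim => [ | h j hh hj | x y' _ [sx [hx bx]] _ [sy [hy hby]]].
- by exists 0; split; [apply: (AF_C 0) | apply: bnd0].
- have [sh [h1 h2]] := Ainf_AF hh.
  exists (sh * (fs * T ^+ j)); rewrite lexpE; split; first by apply: AF_mul => //; apply: AF_gen.
  by apply: (bnd_le _ (bndM h2 (bnd_gen (j:=j)))); lia.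
- by exists (sx + sy); split; [apply: AF_add | apply: bndD].
Qed.

Lemma step_gen (r : R) (hr : r * r = A * r + B) U V :
  r * (P U + P V * r) = P (b%:P * V) + P (U + a * V) * r.
Proof.
apply: (rel0 (z := P V * (r * r - (A * r + B)))).
  rewrite !P_add !P_mul P_C; ring.
by rewrite hr subrr mulr0.
Qed.

Lemma PW m : exists U V, f ^+ m.+1 = P U + P V * f /\ fs ^+ m.+1 = P U + P V * fs /\ V \is monic /\ size V = (m * d).+1 /\ (size U < size V)%N.
Proof.
elim: m => [|m [U [V [e1 [e2 [mV [sV sU]]]]]]].
  exists 0, 1; rewrite P_0 P_1 !add0r !mul1r !expr1; split => //; split => //.
  by rewrite monic1 size_poly1 size_poly0.
have sAV : size (a * V) = (m.+1 * d).+1.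
  by rewrite size_monicM ?monic_neq0 // size_a sV mulSn; set md := (m * _)%N; lia.
have lt1 : (size U < size (a * V)%R)%N by rewrite sAV mulSn; move: sU; rewrite sV; set md := (m * _)%N; lia.
exists (b%:P * V), (U + a * V); rewrite exprS e1 [fs ^+ _.+1]exprS e2.
rewrite !step_gen; [|apply: root_fs|apply: root_f].
split => //; split => //; split.
  by rewrite monicE lead_coefDr // lead_coefM (monicP Hmon) (monicP mV) mulr1.
rewrite addrC size_polyDl // sAV; split => //.
by rewrite size_Cmul // sV mulSn; move: Hd; set md := (m * _)%N; lia.
Qed.

Lemma Ainf_gen' j : (j < d)%N -> in_Ainf1 d f (f * T ^+ j).
Proof. by move=> hj; rewrite -lexpE; apply: Ainf1_gen. Qed.

Lemma Ainf_f : in_Ainf1 d f f.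
Proof. by have := Ainf_gen' Hd; rewrite expr0 mulr1. Qed.

Lemma Ainf_pow k : in_Ainf1 d f (f ^+ k).
Proof.
elim: k => [|k IH]; first by rewrite expr0; exact: (Ainf1_const d f 1).
by rewrite exprS; exact: (Ainf1_mul Ainf_f IH).
Qed.

Lemma const_of_bnd u : bnd (P u) 0 -> u = (u`_0)%:P.
Proof.
move=> hb; apply/polyP => k; rewrite coefC; case: k => [|k] //=.
by have := hb (k.+1)%:Z; rewrite lcPz /=; apply.
Qed.

Lemma D n : forall u v : {poly F}, (size v <= n)%N -> bnd (P u + P v * fs) 0 ->
  in_Ainf1 d f (P u + P v * f).
Proof.
elim: n => [|n IH] u v hs hb.
  move: hs; rewrite size_poly_leq0 => /eqP v0; subst v; move: hb; rewrite P_0 !mul0r !addr0 => hb.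
  by rewrite (const_of_bnd hb) P_C; apply: Ainf1_const.
case: (eqVneq v 0) => [v0 | v0].
  subst v.
  move: hb; rewrite P_0 !mul0r !addr0 => hb.
  by rewrite (const_of_bnd hb) P_C; apply: Ainf1_const.
set n' := (size v).-1.
have sv : size v = n'.+1 by rewrite /n' prednK // size_poly_gt0.
have hn' : (n' <= n)%N by rewrite -ltnS -sv.
set m := (n' %/ d)%N; set j := (n' %% d)%N.
have hj : (j < d)%N by rewrite /j ltn_pmod.
have en' : n' = (m * d + j)%N by rewrite /m /j -divn_eq.
have [U [V [e1 [e2 [mV [sV _]]]]]] := PW m.
set c := lead_coef v.
have c0 : c != 0 by rewrite /c lead_coef_eq0.
set w := c%:P * 'X^j * V.
have sw : size w = n'.+1.
  rewrite /w -mulrA size_Cmul // size_monicM ?monicXn ?monic_neq0 // size_polyXn sV en'.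
  set md := (m * d)%N; lia.
have lw : lead_coef w = c by rewrite /w !lead_coefM lead_coefC lead_coefXn (monicP mV) !mulr1.
have hvw : (size (v - w)%R <= n)%N.
  apply: leq_trans hn'; apply/leq_sizeP => k hk; rewrite coefB.
  case: (ltngtP k n') => hk'.
  - by move: hk; rewrite leqNgt hk'.
  - by rewrite nth_default ?sv // nth_default ?sw // subrr.
  - have h1 : v`_n' = c by rewrite /c lead_coefE sv.
    have h2 : w`_n' = c by rewrite -lw lead_coefE sw.
    by rewrite hk' h1 h2 subrr.
set E := lconst c * (f ^+ m * (f * T ^+ j)).
set Es := lconst c * (fs ^+ m * (fs * T ^+ j)).
have eE : E = P (c%:P * 'X^j * U) + P w * f.
  rewrite /E /w (_ : f ^+ m * (f * T ^+ j) = f ^+ m.+1 * T ^+ j); last by rewrite exprSr; ring.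
  by rewrite e1 !P_mul P_C P_exp; ring.
have eEs : Es = P (c%:P * 'X^j * U) + P w * fs.
  rewrite /Es /w (_ : fs ^+ m * (fs * T ^+ j) = fs ^+ m.+1 * T ^+ j); last by rewrite exprSr; ring.
  by rewrite e2 !P_mul P_C P_exp; ring.
have bEs : bnd Es 0.
  apply: (bnd_le _ (bndM (bndC c) (bndM (bndX (n:=m) bnd_fs) (bnd_gen (j:=j))))).
  move: hj; set md := (m * d)%N; lia.
have inE : in_Ainf1 d f E.
  exact: (Ainf1_mul (Ainf1_const d f c) (Ainf1_mul (Ainf_pow m) (Ainf_gen' hj))).
have IH' := IH (u - c%:P * 'X^j * U) (v - w) hvw.
have -> : P u + P v * f = (P (u - c%:P * 'X^j * U) + P (v - w) * f) + E.
  by rewrite eE !P_sub; ring.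
apply: (Ainf1_add (IH' _) inE).
have -> : P (u - c%:P * 'X^j * U) + P (v - w) * fs = (P u + P v * fs) - Es.
  by rewrite eEs !P_sub; ring.
by apply: bndB.
Qed.

Lemma ideal_fQ i (Q : {poly F}) : (size Q <= i.+1)%N -> in_ideal d f i (f * P Q).
Proof.
move=> hQ; rewrite -[Q]coefK poly_def (big_morph P (@P_add F) (P_0 F)) mulr_sumr.
apply: (big_ind (in_ideal d f i)).
- exact: (ideal0 d f i).
- by move=> x y hx hy; exact: (ideal_add hx hy).
move=> k _; rewrite -mul_polyC P_mul P_C P_exp.
have -> : f * (lconst Q`_k * lpoly 'X ^+ k) = lconst Q`_k * (f * lexp T k) by rewrite lexpE; ring.
apply: ideal_gen; first exact: Ainf1_const.
by rewrite -ltnS (leq_trans (ltn_ord k)).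
Qed.

Lemma C i y s : (i < d)%N -> AF y s -> bnd s (i%:Z - d%:Z) -> in_ideal d f i y.
Proof.
move=> hi [u [v [ey es]]] hb.
set u1 := v - u * a * (b^-1)%:P; set v1 := u * (b^-1)%:P.
set g0 := P u1 + P v1 * f; set t := P u1 + P v1 * fs.
have yg : y = f * g0.
  apply: (rel0 (z := - (P u * (lconst b^-1)) * (f * f - (A * f + B)) - P u * ((lconst b^-1) * B - 1))).
    by rewrite ey /g0 /u1 /v1 !P_sub !P_mul !P_C; ring.
  by rewrite root_f subrr Binv subrr !mulr0 subrr.
have st : s = fs * t.
  apply: (rel0 (z := - (P u * (lconst b^-1)) * (fs * fs - (A * fs + B)) - P u * ((lconst b^-1) * B - 1))).
    by rewrite es /t /u1 /v1 !P_sub !P_mul !P_C; ring.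
  by rewrite root_fs subrr Binv subrr !mulr0 subrr.
have tE : t = - ((lconst b^-1) * f) * s.
  apply: (rel0 (z := t * (1 - (lconst b^-1) * B) + (lconst b^-1) * t * (f * fs + B))).
    by rewrite st; ring.
  by rewrite Binv subrr f_fs addNr !mulr0 addr0.
have bt : bnd t i%:Z.
  rewrite tE; apply: (bnd_le _ (bndM (bndN (bndM (bndC b^-1) f_top.2)) hb)); lia.
pose Q := \poly_(k < i.+1) (if k == 0%N then 0 else lc t k%:Z).
have hQ : (size Q <= i.+1)%N by apply: size_poly.
have h0 : in_Ainf1 d f (P (u1 - Q) + P v1 * f).
  apply: (@D (size v1)) => //.
  have -> : P (u1 - Q) + P v1 * fs = t - P Q by rewrite P_sub /t; ring.
  move=> k hk; rewrite lcD lcN lcPz ifT; last by lia.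
  rewrite coef_poly.
  case: ltnP => hk2.
    rewrite ifF; last by apply/eqP; lia.
    have -> : (absz k)%:Z = k by lia.
    by rewrite subrr.
  by rewrite bt ?subrr //; lia.
rewrite yg.
have -> : f * g0 = (P (u1 - Q) + P v1 * f) * (f * lexp T 0) + f * P Q.
  by rewrite lexpE /g0 (P_sub u1 Q); ring.
apply: ideal_add; last exact: ideal_fQ.
exact: (ideal_gen h0 (leq0n i)).
Qed.

Lemma negM (m n : nat) : (- m%:Z) * n%:Z = - ((m * n)%N)%:Z.
Proof. by rewrite mulNr -PoszM. Qed.

Lemma dN_ge N : (N <= d * N)%N.
Proof. by rewrite leq_pmull. Qed.

Lemma lemA l N (lam p : {poly F}) : (l < d)%N ->
  bnd (P lam * f - P p) (- ((d * N + l)%N%:Z) - 1) ->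
  exists y, in_ideal d f (d - 1 - l) y /\
    bnd ((linv (lexp f N) * sqrtD a f) * P lam - y) (- (N%:Z) - 1).
Proof.
move=> hl hz.
set z := P lam * f - P p in hz.
exists (- g ^+ N * (P lam * fs - P p)); split.
  apply: (@C _ _ (- (lconst b^-1 * (fs - A)) ^+ N * z)); first by lia.
    apply: AF_mul; first by apply: AF_opp; apply: AF_exp; apply: AF_mul; [apply: AF_C | apply: AF_sub; [apply: AF_f | apply: AF_P]].
    by rewrite /z; apply: AF_sub; [apply: AF_mul; [apply: AF_P | apply: AF_fs] | apply: AF_P].
  have bs : bnd (lconst b^-1 * (fs - A)) d%:Z.
    have -> : lconst b^-1 * (fs - A) = - (lconst b^-1 * f) by rewrite /fs; ring.
    by apply: bndN; rewrite -[X in bnd _ X]add0r; apply: bndM; [apply: bndC | apply: f_top.2].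
  apply: (bnd_le _ (bndM (bndN (bndX (n:=N) bs)) hz)).
  rewrite -PoszM; have := dN_ge N; set dN := (d * N)%N; lia.
rewrite linv_fN sqrtDE.
have -> : g ^+ N * (f - fs) * P lam - - g ^+ N * (P lam * fs - P p) = g ^+ N * z by rewrite /z; ring.
apply: (bnd_le _ (bndM (bndX (n:=N) bnd_g) hz)).
rewrite negM; have := dN_ge N; set dN := (d * N)%N; lia.
Qed.

Lemma lemB l N y : (l < d)%N -> in_ideal d f (d - 1 - l) y ->
  exists lam p : {poly F}, bnd (P lam * f - P p) (- ((d * N + l)%N%:Z) - 1) /\
    bnd ((linv (lexp f N) * sqrtD a f) * P lam - y) (- (N%:Z) - 1).
Proof.
move=> hl hy.
have hi : (d - 1 - l < d)%N by lia.
have [s [hs hb]] := ideal_AF hi hy.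
have [U [V [e1 e2]]] := AF_mul (AF_exp N AF_f) hs.
exists V, (U + V * a).
have hfs : bnd (fs ^+ N * s) (- ((d * N + l)%N%:Z) - 1).
  apply: (bnd_le _ (bndM (bndX (n:=N) bnd_fs) hb)).
  rewrite negM; set dN := (d * N)%N; lia.
split.
  have -> : P V * f - P (U + V * a) = - (fs ^+ N * s) by rewrite e2 P_add P_mul /fs; ring.
  by apply: bndN.
rewrite linv_fN sqrtDE.
have gf : g ^+ N * f ^+ N = 1 by rewrite -exprMn mulrC f_g expr1n.
have -> : y = g ^+ N * (f ^+ N * y) by rewrite mulrA gf mul1r.
rewrite e1.
have -> : g ^+ N * (f - fs) * P V - g ^+ N * (P U + P V * f) = - (g ^+ N * (fs ^+ N * s)).
  by rewrite e2; ring.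
apply: bndN; apply: (bnd_le _ (bndM (bndX (n:=N) bnd_g) hfs)).
rewrite negM; have := dN_ge N; set dN := (d * N)%N; lia.
Qed.

Lemma small_e (e : rat) : 0 < e -> exists N0 : nat, forall N : nat, (N0 <= N)%N ->
  forall z : R, bnd z (- (N%:Z) - 1) -> labs z < e.
Proof.
move=> he; exists (Num.bound e^-1) => N hN z hz.
have := (labs_lt z (- (N%:Z))).2 hz => h.
apply: (lt_le_trans h).
rewrite -invr_expz -[e]invrK lef_pV2; first last.
- by rewrite posrE invr_gt0.
- by rewrite posrE exprz_gt0 // q_gt0.
apply: ltW; apply: (lt_le_trans (archi_boundP _)); first by rewrite invr_ge0 ltW.
apply: (@le_trans _ _ (N%:R)); first by rewrite ler_nat.
rewrite -exprnP -natrX ler_nat ltnW // ltn_expl //.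
exact: card_finNzRing_gt1.
Qed.

Lemma main_sec l : (l < d)%N ->
  hausdorff_cvg
    (fun N : nat => fun y : laurent F =>
       exists lam : {poly F},
         Lambda f ((qF F)%:R ^ (- ((size a).-1 * N + l)%N%:Z)) lam /\
         y = lmul (lmul (linv (lexp f N)) (sqrtD a f)) (lpoly lam))
    (in_ideal ((size a).-1) f ((size a).-1 - 1 - l)).
Proof.
move=> hl e he.
have [N0 hN0] := small_e he.
exists N0 => N hN; split.
  move=> x [lam [[p hp] ->]].
  have hz := (labs_lt _ _).1 hp.
  have [y [hy hxy]] := lemA hl hz.
  by exists y; split => //; apply: (hN0 N hN).
move=> y hy.
have [lam [p [hz hxy]]] := lemB N hl hy.
exists ((linv (lexp f N) * sqrtD a f) * P lam); split; last by apply: (hN0 N hN).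
exists lam; split => //; exists p.
by apply/labs_lt.
Qed.
End Main.

Theorem proposition1 (F : finFieldType) (a : {poly F}) (b : F) (f : laurent F) :
  a \is monic -> (1 <= (size a).-1)%N -> b != 0 ->
  (* f is a root of X^2 - aX - b *)
  lmul f f = ladd (lmul (lpoly a) f) (lconst b) ->
  (* |f| = q^d *)
  labs f = (qF F)%:R ^ ((size a).-1)%:Z ->
  (* f is not in k = F_q(T) *)
  ~ (exists p r : {poly F}, r != 0 /\ lmul (lpoly r) f = lpoly p) ->
  forall l : nat, (l < (size a).-1)%N ->
  hausdorff_cvg
    (fun N : nat => fun y : laurent F =>
       exists lam : {poly F},
         Lambda f ((qF F)%:R ^ (- ((size a).-1 * N + l)%N%:Z)) lam /\
         y = lmul (lmul (linv (lexp f N)) (sqrtD a f)) (lpoly lam))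
    (in_ideal ((size a).-1) f ((size a).-1 - 1 - l)).
Proof.
move=> Hmon Hd Hb Hroot Habs _ l hl.
exact: (main_sec Hmon Hd Hb Hroot Habs hl).
Qed.
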